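(* Let $(\mathcal A,\mathcal T,(-))$ be a meta-tangible $\mathcal T$-group module triple. Then every nonzero element $c\in\mathcal A$, of height $m_c$, is uniform, i.e. there is $c_{\mathcal T}\in\mathcal T$ such that one of the following holds: (1) $m_c=1$ and $c=c_{\mathcal T}\in\mathcal T$; (2) $m_c=2$ and $c=c_{\mathcal T}^\circ$; (3) $m_c\ge3$, $c=m_cc_{\mathcal T}$ (the $m_c$-fold sum of $c_{\mathcal T}$), and the triple is exceptional, i.e. $(-)$ is of the first kind and $\mathcal A$ has height greater than $2$, and moreover $\mathbf 3\neq\mathbb 1$.
   Context: $(\mathcal A,+,\mathbb 0)$ commutative monoid, $\mathcal T\subseteq\mathcal A\setminus\{\mathbb 0\}$. A negation map is $(-):\mathcal A\to\mathcal A$ with $(-)(b_1+b_2)=(-)b_1+(-)b_2$, $(-)((-)b)=b$, $(-)\mathbb 0=\mathbb 0$, $(-)\mathcal T\subseteq\mathcal T$. Write $b(-)c:=b+((-)c)$, $b^\circ:=b(-)b$, $\mathcal A^\circ=\{b^\circ:b\in\mathcal A\}$. A $\mathcal T$-triple $(\mathcal A,\mathcal T,(-))$: such data with an action $\mathcal T\times\mathcal A\to\mathcal A$ satisfying $a(b_1+b_2)=ab_1+ab_2$, $a\mathbb 0=\mathbb 0$, $(-)(ab)=((-)a)b=a((-)b)$, with $\mathcal T\cap\mathcal A^\circ=\emptyset$ and every element of $\mathcal A$ a finite sum of elements of $\mathcal T$. It is a $\mathcal T$-group module triple if moreover $\mathcal T$ is a group with identity $\mathbb 1$ whose multiplication is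 the restriction of the action, $\mathbb 1b=b$ and $(a_1a_2)b=a_1(a_2b)$. Meta-tangible: $a+b\in\mathcal T$ for all $a,b\in\mathcal T$ with $b\neq(-)a$. $(-)$ is of the first kind if $(-)a=a$ for all $a\in\mathcal T$. $\mathbf 3=\mathbb 1+\mathbb 1+\mathbb 1$. Height of $c$: least $t$ with $c=\sum_{i=1}^ta_i$, $a_i\in\mathcal T$; height of $\mathcal A$: supremum over its elements. *)

(* Defs.v *)
From Stdlib Require Import List Arith.
Import ListNotations.
Set Implicit Arguments.

(** The carrier A is [car], T is the predicate [tang], the action
    T x A -> A is [act] (only meaningful for first argument in T),
    and the group multiplication on T is the restriction of [act]. *)
Record TGroupModuleTriple := {
  car : Type;
  add : car -> car -> car;
  zero : car;
  tang : car -> Prop;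
  neg : car -> car;
  act : car -> car -> car;
  one : car;
  add_assoc : forall x y z, add x (add y z) = add (add x y) z;
  add_comm : forall x y, add x y = add y x;
  add_0l : forall x, add zero x = x;
  tang_nz : forall a, tang a -> a <> zero;
  neg_add : forall b1 b2, neg (add b1 b2) = add (neg b1) (neg b2);
  neg_invol : forall b, neg (neg b) = b;
  neg_zero : neg zero = zero;
  neg_tang : forall a, tang a -> tang (neg a);
  act_add : forall a b1 b2, tang a -> act a (add b1 b2) = add (act a b1) (act a b2);
  act_zero : forall a, tang a -> act a zero = zero;
  act_negl : forall a b, tang a -> neg (act a b) = act (neg a) b;
  act_negr : forall a b, tang a -> neg (act a b) = act a (neg b);
  tang_not_circ : forall a b, tang a -> a <> add b (neg b);
  tang_generates : forall c : car,
      exists l : list car, Forall tang l /\ c = fold_right add zero l;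
  one_tang : tang one;
  tang_mul : forall a1 a2, tang a1 -> tang a2 -> tang (act a1 a2);
  mul_one_r : forall a, tang a -> act a one = a;
  tang_inv : forall a, tang a ->
      exists a', tang a' /\ act a' a = one /\ act a a' = one;
  one_act : forall b, act one b = b;
  act_assoc : forall a1 a2 b, tang a1 -> tang a2 ->
      act (act a1 a2) b = act a1 (act a2 b)
}.

Section Defs.
Variable X : TGroupModuleTriple.

Definition circ (b : car X) : car X := add X b (neg X b).

Definition meta_tangible : Prop :=
  forall a b, tang X a -> tang X b -> b <> neg X a -> tang X (add X a b).

Definition first_kind : Prop := forall a, tang X a -> neg X a = a.

Fixpoint nsum (n : nat) (x : car X) : car X :=
  match n with 0 => zero X | S k => add X x (nsum k x) end.

Definition sum_of_tang (c : car X) (t : nat) : Prop :=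
  exists l : list (car X), length l = t /\ Forall (tang X) l /\
                           c = fold_right (add X) (zero X) l.

Definition height (c : car X) (m : nat) : Prop :=
  sum_of_tang c m /\ forall t, sum_of_tang c t -> m <= t.

Definition height_gt2 : Prop := exists c m, height c m /\ 2 < m.

Definition three : car X := add X (one X) (add X (one X) (one X)).

End Defs.

(* Main.v *)
Require Import Defs.
From Stdlib Require Import List Arith Lia Classical.
Import ListNotations.

Section Helpers.
Variable X : TGroupModuleTriple.

Lemma fold_mid (l1 l2 : list (car X)) (y : car X) :
  fold_right (add X) (zero X) (l1 ++ y :: l2) = add X y (fold_right (add X) (zero X) (l1 ++ l2)).
Proof.
  induction l1 as [|a l1 IH]; simpl; [reflexivity|].
  rewrite IH, add_assoc, (add_comm X a y), <- add_assoc. reflexivity.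
Qed.

Lemma fold_const (a : car X) (l : list (car X)) :
  (forall y, In y l -> y = a) -> fold_right (add X) (zero X) l = nsum X (length l) a.
Proof.
  induction l as [|b l IH]; intros H; simpl; [reflexivity|].
  rewrite (H b (or_introl eq_refl)), IH; auto.
  intros y Hy; apply H; right; auto.
Qed.

Lemma fold_repeat (a : car X) n : fold_right (add X) (zero X) (repeat a n) = nsum X n a.
Proof. induction n; simpl; congruence. Qed.

Lemma pair_neg (hmt : meta_tangible X) c m x r y :
  height X c m -> c = fold_right (add X) (zero X) (x :: r) -> length (x :: r) = m ->
  Forall (tang X) (x :: r) -> In y r -> y = neg X x.
Proof.
  intros [_ Hmin] Hc Hl Hall Hy.
  apply NNPP; intro Hne.
  destruct (in_split y r) as [l1 [l2 E]]; auto. subst r.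
  assert (Hall' := proj1 (Forall_forall _ _) Hall).
  assert (tx : tang X x) by (apply Hall'; left; auto).
  assert (ty : tang X y) by (apply Hall'; right; apply in_or_app; right; left; auto).
  assert (Hs : sum_of_tang X c (S (length (l1 ++ l2)))).
  { exists (add X x y :: l1 ++ l2). split; [reflexivity|]. split.
    - constructor. apply hmt; auto.
      apply Forall_forall; intros z Hz; apply Hall'; right.
      apply in_app_or in Hz; apply in_or_app; destruct Hz; [left|right; right]; auto.
    - rewrite Hc; simpl; rewrite fold_mid, add_assoc; reflexivity. }
  apply Hmin in Hs. simpl in Hl. rewrite !length_app in *. simpl in Hl. lia.
Qed.

End Helpers.

Theorem theorem7p28 (X : TGroupModuleTriple) (hmt : meta_tangible X) :
  forall (c : car X) (m : nat), c <> zero X -> height X c m ->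
  exists cT : car X, tang X cT /\
    ( (m = 1 /\ c = cT)
    \/ (m = 2 /\ c = circ X cT)
    \/ (3 <= m /\ c = nsum X m cT /\
        first_kind X /\ height_gt2 X /\ three X <> one X) ).
Proof.
  intros c m Hc Hh.
  pose proof Hh as [[l [Hlen [Hall Hcl]]] Hmin].
  destruct l as [|a1 [|a2 [|a3 rest]]].
  - simpl in Hcl; contradiction.
  - exists a1. split; [exact (Forall_inv Hall)|]. left. simpl in *. split; [lia|].
    rewrite Hcl, add_comm, add_0l; reflexivity.
  - exists a1. split; [exact (Forall_inv Hall)|]. right; left. simpl in Hlen. split; [lia|].
    assert (E : a2 = neg X a1) by (eapply pair_neg; eauto; simpl; auto).
    rewrite Hcl; simpl. rewrite (add_comm X a2 (zero X)), add_0l, E. reflexivity.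
  - exists a1.
    assert (Hall' := proj1 (Forall_forall _ _) Hall).
    assert (t1 : tang X a1) by (apply Hall'; simpl; auto).
    assert (t2 : tang X a2) by (apply Hall'; simpl; auto).
    assert (t3 : tang X a3) by (apply Hall'; simpl; auto).
    split; [exact t1|]. right; right.
    assert (Hy : forall y, In y (a2 :: a3 :: rest) -> y = neg X a1)
      by (intros y Hy; eapply pair_neg; eauto).
    assert (H23 : a3 = neg X a2).
    { eapply (@pair_neg X hmt c m a2 (a1 :: a3 :: rest)); eauto.
      - rewrite Hcl; simpl. rewrite !add_assoc, (add_comm X a1 a2). reflexivity.
      - apply Forall_forall; intros z Hz; apply Hall'; simpl in *; tauto.
      - simpl; auto. }
    assert (Hn : neg X a1 = a1).
    { rewrite <- (Hy a3) by (simpl; auto). rewrite H23, (Hy a2) by (simpl; auto).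
      apply neg_invol. }
    assert (Hc' : c = nsum X m a1).
    { rewrite Hcl, <- Hlen. apply fold_const. intros y [<-|Hin]; auto.
      rewrite (Hy y Hin). exact Hn. }
    simpl in Hlen.
    split; [lia|]. split; [exact Hc'|]. split; [|split].
    + intros a ta.
      destruct (tang_inv X a1 t1) as [a1' [ta1' [h1 h2]]].
      assert (tb : tang X (act X a a1')) by (apply tang_mul; auto).
      assert (Ea : a = act X (act X a a1') a1).
      { rewrite act_assoc, h1, mul_one_r; auto. }
      rewrite Ea, (act_negr X _ _ tb), Hn. reflexivity.
    + exists c, m. split; [exact Hh|lia].
    + intro H3.
      assert (E3 : add X a1 (add X a1 a1) = a1).
      { rewrite <- (mul_one_r X a1 t1) at 4. rewrite <- H3. unfold three.
        rewrite !act_add by auto. rewrite !mul_one_r by auto. reflexivity. }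
      assert (Hs : sum_of_tang X c (S (length rest))).
      { exists (repeat a1 (S (length rest))). split; [apply repeat_length|]. split.
        - apply Forall_forall; intros z Hz; apply repeat_spec in Hz; subst; auto.
        - rewrite fold_repeat, Hc', <- Hlen. simpl.
          rewrite !add_assoc. rewrite <- (add_assoc X a1 a1 a1), E3. reflexivity. }
      apply Hmin in Hs. lia.
Qed.
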